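(* For all histories $\vec\delta,\vec\gamma,\vec\delta',\vec\gamma'$ and all $\rho,\sigma$: if $\langle\vec\delta,\rho\rangle$ is compliant with $\langle\vec\gamma,\sigma\rangle$, then $\langle\vec\delta':\vec\delta,\rho\rangle$ is compliant with $\langle\vec\gamma':\vec\gamma,\sigma\rangle$, where $\vec\delta':\vec\delta$ denotes the stack obtained by placing $\vec\delta$ on top of $\vec\delta'$ (concatenation with $\vec\delta'$ at the bottom), and similarly for $\vec\gamma':\vec\gamma$.
   Context: Let $\mathcal N$ be a countable set of names and $\overline{\mathcal N}=\{\bar a\mid a\in\mathcal N\}$ a disjoint set of conames; $\alpha$ ranges over $\mathcal N\cup\overline{\mathcal N}$, with $\bar{\bar a}=a$. Retractable contracts are the closed expressions generated by $\sigma ::= \mathbf 1 \mid \sum_{i\in I} a_i.\sigma_i \ (\text{input}) \mid \sum_{i\in I}\bar a_i.\sigma_i\ (\text{retractable output}) \mid \bigoplus_{i\in I}\bar a_i.\sigma_i\ (\text{unretractable output}) \mid x \mid \mathsf{rec}\,x.\sigma$, where $I$ is non-empty and finite, names/conames in each choice are pairwise distinct, and $\sigma$ is not a variable in $\mathsf{rec}\,x.\sigma$. Choices are commutative; $\mathsf{rec}\,x.\sigma$ is identified with $\sigma[\mathsf{rec}\,x.\sigma/x]$. A unary $\bar a.\sigma$ may be read as either kind of output. Histories are stacks $\vec\gamma ::= [\,] \mid \vec\gamma:\sigma$ with $\sigma$ a retractable contract or the special symbol $\circ$ (the last element pushed is the top). A contract with history is a pair $\langle\vec\gamma,\sigma\rangle$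 with $\sigma$ a contract or $\circ$. Transitions: $\langle\vec\gamma,\alpha.\sigma+\sigma'\rangle\xrightarrow{\alpha}\langle\vec\gamma:\sigma',\sigma\rangle$ (for retractable choices, $+$ being input or retractable output sum); $\langle\vec\gamma,\bar a.\sigma\oplus\sigma'\rangle\xrightarrow{\tau}\langle\vec\gamma,\bar a.\sigma\rangle$; $\langle\vec\gamma,\alpha.\sigma\rangle\xrightarrow{\alpha}\langle\vec\gamma:\circ,\sigma\rangle$; $\langle\vec\gamma:\sigma',\sigma\rangle\xrightarrow{\mathsf{rb}}\langle\vec\gamma,\sigma'\rangle$. Client/server pairs $\langle\vec\delta,\rho\rangle\parallel\langle\vec\gamma,\sigma\rangle$ reduce by: (comm) if $\langle\vec\delta,\rho\rangle\xrightarrow{\alpha}\langle\vec\delta',\rho'\rangle$ and $\langle\vec\gamma,\sigma\rangle\xrightarrow{\bar\alpha}\langle\vec\gamma',\sigma'\rangle$ then the pair reduces to $\langle\vec\delta',\rho'\rangle\parallel\langle\vec\gamma',\sigma'\rangle$; ($\tau$) a $\tau$-transition of either component alone; (rbk) if both components do an $\mathsf{rb}$ transition and $\rho\neq\mathbf 1$, both roll back simultaneously; rule (rbk) applies only if neither (comm) nor ($\tau$) applies. Then $\langle\vec\delta,\rho\rangle$ is compliant with $\langle\vec\gamma,\sigma\rangle$ if whenever $\langle\vec\delta,\rho\rangle\parallel\langle\vec\gamma,\sigma\rangle$ reduces in finitely many steps to a pair $\langle\vec\delta'',\rho'\rangle\parallel\langle\vec\gamma'',\sigma'\rangle$ with no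 further reduction, we have $\rho'=\mathbf 1$. *)

(* Defs.v *)
From Stdlib Require Import Relations.
From mathcomp Require Import all_boot.
Set Implicit Arguments. Unset Strict Implicit. Unset Printing Implicit Defensive.

(* Retractable contracts, with de Bruijn
   variables: CRec s binds index 0 in s.  A choice is a finite list of
   (name, continuation) pairs; commutativity of choices is handled by
   letting transitions pick any element of the list. *)
Inductive contract : Type :=
| CEnd
| CInp  of seq (nat * contract)
| CROut of seq (nat * contract)     (* sum_i abar_i.s_i  (retractable) *)
| CUOut of seq (nat * contract)     (* (+)_i abar_i.s_i (unretractable) *)
| CVar  of nat
| CRec  of contract.

Fixpoint wf_at (k : nat) (t : contract) : bool :=
  match t with
  | CEnd => true
  | CInp l | CROut l | CUOut l =>
      [&& 0 < size l, uniq (map fst l) & all (fun p => wf_at k p.2) l]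
  | CVar n => n < k
  | CRec s => (if s is CVar _ then false else true) && wf_at k.+1 s
  end.

Definition wf (t : contract) : bool := wf_at 0 t.

(* None stands for the special symbol \circ *)
Definition wf_opt (t : option contract) : bool :=
  if t is Some c then wf c else true.

(* Histories: the head of the list is the TOP of the stack (last pushed). *)
Definition history := seq (option contract).
Definition wf_hist (h : history) : bool := all wf_opt h.

(* substitution of a closed term u for index k *)
Fixpoint subst (k : nat) (u : contract) (t : contract) : contract :=
  match t with
  | CEnd => CEnd
  | CInp l => CInp (map (fun p => (p.1, subst k u p.2)) l)
  | CROut l => CROut (map (fun p => (p.1, subst k u p.2)) l)
  | CUOut l => CUOut (map (fun p => (p.1, subst k u p.2)) l)
  | CVar n => if n == k then u else if k < n then CVar n.-1 else CVar n
  | CRec s => CRec (subst k.+1 u s)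
  end.

(* rec x.s is identified with s[rec x.s/x] *)
Definition unfold_rec (s : contract) : contract := subst 0 (CRec s) s.

Inductive is_one : contract -> Prop :=
| one_end : is_one CEnd
| one_rec s : is_one (unfold_rec s) -> is_one (CRec s).

Definition is_one_opt (t : option contract) : Prop :=
  if t is Some c then is_one c else False.

Inductive act : Type := AIn of nat | AOut of nat | ATau | ARb.

Definition dual (x : act) : act :=
  match x with AIn a => AOut a | AOut a => AIn a | y => y end.

Definition is_io (x : act) : Prop :=
  match x with AIn _ | AOut _ => True | _ => False end.

Inductive ctrans : history -> option contract -> act ->
                   history -> option contract -> Prop :=
| tr_inp h l1 a s l2 : l1 ++ l2 <> [::] ->
    ctrans h (Some (CInp (l1 ++ (a, s) :: l2))) (AIn a)
           (Some (CInp (l1 ++ l2)) :: h) (Some s)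
| tr_rout h l1 a s l2 : l1 ++ l2 <> [::] ->
    ctrans h (Some (CROut (l1 ++ (a, s) :: l2))) (AOut a)
           (Some (CROut (l1 ++ l2)) :: h) (Some s)
| tr_utau h l1 a s l2 : l1 ++ l2 <> [::] ->
    ctrans h (Some (CUOut (l1 ++ (a, s) :: l2))) ATau
           h (Some (CUOut [:: (a, s)]))
| tr_inp1 h a s :
    ctrans h (Some (CInp [:: (a, s)])) (AIn a) (None :: h) (Some s)
| tr_rout1 h a s :
    ctrans h (Some (CROut [:: (a, s)])) (AOut a) (None :: h) (Some s)
| tr_uout1 h a s :
    ctrans h (Some (CUOut [:: (a, s)])) (AOut a) (None :: h) (Some s)
| tr_rec h s x h' t :
    ctrans h (Some (unfold_rec s)) x h' t ->
    ctrans h (Some (CRec s)) x h' t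
| tr_rb h x t : ctrans (x :: h) t ARb h x.

Definition cstate := (history * option contract)%type.
Definition pstate := (cstate * cstate)%type.

Inductive pre_step : pstate -> pstate -> Prop :=
| st_comm dh r gh s x dh' r' gh' s' :
    is_io x -> ctrans dh r x dh' r' -> ctrans gh s (dual x) gh' s' ->
    pre_step ((dh, r), (gh, s)) ((dh', r'), (gh', s'))
| st_tau_l dh r gh s dh' r' :
    ctrans dh r ATau dh' r' ->
    pre_step ((dh, r), (gh, s)) ((dh', r'), (gh, s))
| st_tau_r dh r gh s gh' s' :
    ctrans gh s ATau gh' s' ->
    pre_step ((dh, r), (gh, s)) ((dh, r), (gh', s')).

Definition rbk_step (S S' : pstate) : Prop :=
  match S, S' with
  | ((dh, r), (gh, s)), ((dh', r'), (gh', s')) =>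
      ~ is_one_opt r /\ ctrans dh r ARb dh' r' /\ ctrans gh s ARb gh' s'
  end.

Definition step (S S' : pstate) : Prop :=
  pre_step S S' \/ ((forall S'', ~ pre_step S S'') /\ rbk_step S S').

Definition compliant (c d : cstate) : Prop :=
  forall S', clos_refl_trans pstate step (c, d) S' ->
    (forall S'', ~ step S' S'') -> is_one_opt S'.1.2.

(* Main.v *)
Require Import Defs.
From mathcomp Require Import all_boot.
From Stdlib Require Import Relations.

Lemma ctrans_gen h t x h1 t1 : ctrans h t x h1 t1 -> x <> ARb ->
  exists p, h1 = p ++ h /\ forall k, ctrans k t x (p ++ k) t1.
Proof.
induction 1; intros Hx.
- exists [:: Some (CInp (l1 ++ l2))]; split; [done|]; intros k; by constructor.
- exists [:: Some (CROut (l1 ++ l2))]; split; [done|]; intros k; by constructor.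
- exists [::]; split; [done|]; intros k; by constructor.
- exists [:: None]; split; [done|]; intros k; by constructor.
- exists [:: None]; split; [done|]; intros k; by constructor.
- exists [:: None]; split; [done|]; intros k; by constructor.
- destruct (IHctrans Hx) as [p [E H1]]; exists p; split; [done|].
  intros k; constructor; apply H1.
- by [].
Qed.

Lemma ctrans_rb h t h1 t1 : ctrans h t ARb h1 t1 -> h = t1 :: h1.
Proof.
remember ARb as x eqn:Ex; induction 1; try discriminate; auto.
Qed.

Definition emb (e f : history) (S : pstate) : pstate :=
  ((S.1.1 ++ e, S.1.2), (S.2.1 ++ f, S.2.2)).

Lemma io_not_rb x : is_io x -> x <> ARb.
Proof. by destruct x. Qed.
Lemma io_dual_not_rb x : is_io x -> dual x <> ARb.
Proof. by destruct x. Qed.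

Lemma lemA e f S T : pre_step S T -> pre_step (emb e f S) (emb e f T).
Proof.
destruct 1; unfold emb; simpl.
- destruct (@ctrans_gen _ _ _ _ _ H0 (@io_not_rb _ H)) as [p [-> Hp]].
  destruct (@ctrans_gen _ _ _ _ _ H1 (@io_dual_not_rb _ H)) as [q [-> Hq]].
  rewrite -!catA. eapply st_comm; eauto.
- destruct (@ctrans_gen _ _ _ _ _ H ltac:(discriminate)) as [p [-> Hp]].
  rewrite -!catA. eapply st_tau_l; eauto.
- destruct (@ctrans_gen _ _ _ _ _ H ltac:(discriminate)) as [p [-> Hp]].
  rewrite -!catA. eapply st_tau_r; eauto.
Qed.

Lemma lemB e f S U : pre_step (emb e f S) U -> exists T, pre_step S T /\ U = emb e f T.
Proof.
destruct S as [[dh r] [gh s]]; unfold emb; simpl.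
remember ((dh ++ e, r), (gh ++ f, s)) as X eqn:EX.
destruct 1; injection EX; intros; subst.
- destruct (@ctrans_gen _ _ _ _ _ H0 (@io_not_rb _ H)) as [p [-> Hp]].
  destruct (@ctrans_gen _ _ _ _ _ H1 (@io_dual_not_rb _ H)) as [q [-> Hq]].
  exists ((p ++ dh, r'), (q ++ gh, s')); split.
  + eapply st_comm; eauto.
  + unfold emb; simpl; by rewrite -!catA.
- destruct (@ctrans_gen _ _ _ _ _ H ltac:(discriminate)) as [p [-> Hp]].
  exists ((p ++ dh, r'), (gh, s)); split.
  + eapply st_tau_l; eauto.
  + unfold emb; simpl; by rewrite -!catA.
- destruct (@ctrans_gen _ _ _ _ _ H ltac:(discriminate)) as [p [-> Hp]].
  exists ((dh, r), (p ++ gh, s')); split.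
  + eapply st_tau_r; eauto.
  + unfold emb; simpl; by rewrite -!catA.
Qed.

Lemma lemC e f S T : rbk_step S T -> rbk_step (emb e f S) (emb e f T).
Proof.
destruct S as [[dh r] [gh s]]; destruct T as [[dh' r'] [gh' s']]; unfold emb; simpl.
intros [H1 [H2 H3]]. apply ctrans_rb in H2; apply ctrans_rb in H3; subst.
split; [done|]; split; constructor.
Qed.

Lemma lemD e f S U : rbk_step (emb e f S) U ->
  (exists T, rbk_step S T /\ U = emb e f T) \/
  ((S.1.1 = [::] \/ S.2.1 = [::]) /\ ~ is_one_opt S.1.2).
Proof.
destruct S as [[dh r] [gh s]]; destruct U as [[dh' r'] [gh' s']]; unfold emb; simpl.
intros [H1 [H2 H3]]. apply ctrans_rb in H2; apply ctrans_rb in H3.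
destruct dh as [|x dh]; [right; auto|].
destruct gh as [|y gh]; [right; auto|].
left. simpl in H2, H3. injection H2; injection H3; intros; subst.
exists ((dh, r'), (gh, s')); split; [|by []].
split; [done|]; split; constructor.
Qed.

Lemma no_rbk_nil S T : (S.1.1 = [::] \/ S.2.1 = [::]) -> ~ rbk_step S T.
Proof.
destruct S as [[dh r] [gh s]]; destruct T as [[dh' r'] [gh' s']]; simpl.
intros Hn [_ [H2 H3]]. apply ctrans_rb in H2; apply ctrans_rb in H3.
destruct Hn; subst; discriminate.
Qed.

Theorem lemma3 (d g d' g' : history) (r s : option contract) :
  wf_hist d -> wf_hist g -> wf_hist d' -> wf_hist g' -> wf_opt r -> wf_opt s ->
  compliant (d, r) (g, s) -> compliant (d ++ d', r) (g ++ g', s).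
Proof.
intros _ _ _ _ _ _ Hc.
set S0 : pstate := ((d, r), (g, s)).
assert (E0 : ((d ++ d', r), (g ++ g', s)) = emb d' g' S0) by done.
assert (Inv : forall U, clos_refl_trans pstate step (emb d' g' S0) U ->
          exists S, clos_refl_trans pstate step S0 S /\ U = emb d' g' S).
{ intros U HU. apply clos_rt_rtn1 in HU. induction HU as [|V U HVU HU IH].
  - exists S0; split; [apply rt_refl|done].
  - destruct IH as [S [HS ->]].
    destruct HVU as [Hp | [Hnp Hr]].
    + destruct (@lemB _ _ _ _ Hp) as [T [HT ->]].
      exists T; split; [eapply rt_trans; [exact HS| apply rt_step; left; exact HT]|done].
    + destruct (@lemD _ _ _ _ Hr) as [[T [HT ->]] | [Hnil Hno]].
      * exists T; split; [|done].
        eapply rt_trans; [exact HS| apply rt_step; right; split; [|exact HT]].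
        intros T' HT'. exact (Hnp _ (@lemA d' g' _ _ HT')).
      * exfalso; apply Hno. apply (Hc S HS).
        intros T [HT | [_ HT]].
        -- exact (Hnp _ (@lemA d' g' _ _ HT)).
        -- exact (@no_rbk_nil _ _ Hnil HT). }
intros U HU Hstuck. rewrite E0 in HU.
destruct (Inv U HU) as [S [HS ->]].
apply (Hc S HS).
intros T [HT | [Hnp HT]].
- exact (Hstuck _ (or_introl (@lemA d' g' _ _ HT))).
- apply (Hstuck (emb d' g' T)); right; split; [|exact (@lemC d' g' _ _ HT)].
  intros V HV. destruct (@lemB _ _ _ _ HV) as [T' [HT' _]]. exact (Hnp _ HT').
Qed.
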